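(* Let $B$ be a finite simplicial complex and $a$ a simplicial $1$-cochain on $B$ with values $\pm1$ such that $\mathcal{F}(da)$ is a cocycle. Then the consistent collection of framed small necklaces over the $2$-skeleton of $B$ determined by $a$ (the small symmetric triangulated circle bundle over the $2$-skeleton) extends uniquely to a consistent collection of framed small necklaces over the $3$-skeleton of $B$.
   Context: A necklace over a simplex $\sigma$ is a cyclic word whose beads are colored by the vertices of $\sigma$; for a face $\tau\subset\sigma$ the necklace of $\tau$ is obtained by deleting beads whose colors are not in $\tau$, and a collection of necklaces over the simplices of a complex is consistent if it satisfies this for all face inclusions (with compatible inclusion morphisms). A small necklace has exactly two beads of each color and is invariant under rotation by half its length; framed means one bead of each color is bold, and consistency requires bold beads to map to bold beads. The collection determined by $a$: on an edge $[i,j]$ the framed necklace $ijij$ has the bead after the bold $i$ equal to the bold $j$ iff $a([i,j])=+1$; on each triangle it is the unique framed small necklace restricting to these edge necklaces. $d$ is the simplicial coboundary and $\mathcal{F}(3)=\mathcal{F}(-1)=1/4$, $\mathcal{F}(-3)=\mathcal{F}(1)=-1/4$ applied valuewise. *)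

(* Defs.v *)
From mathcomp Require Import all_boot all_order all_algebra.
Set Implicit Arguments. Unset Strict Implicit. Unset Printing Implicit Defensive.
Import GRing.Theory Num.Theory.
Local Open Scope ring_scope.

(* Vertices of the finite simplicial complex are 'I_n; simplices are nonempty
   finite sets of vertices, oriented by the natural order of 'I_n. *)
Definition simplicial_complex (n : nat) (K : {set {set 'I_n}}) : Prop :=
  set0 \notin K /\
  (forall s t : {set 'I_n}, s \in K -> t \subset s -> t != set0 -> t \in K).

(* A bead: (colour, is_bold).  A necklace is a cyclic word of beads,
   represented by a sequence; cyclic words are compared up to rotation. *)
Definition bead n := ('I_n * bool)%type.

Definition cyc_eq (T : Type) (s t : seq T) : Prop := exists k, rot k s = t.

Definition framed_small n (S : {set 'I_n}) (w : seq (bead n)) : Prop :=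
  size w = (2 * #|S|)%N /\
  (forall x, x \in S -> count_mem (x, true) w = 1%N /\ count_mem (x, false) w = 1%N) /\
  rot #|S| (map fst w) = map fst w.

Definition restrict n (t : {set 'I_n}) (w : seq (bead n)) : seq (bead n) :=
  filter (fun b => b.1 \in t) w.

(* A consistent collection of framed small necklaces over the k-skeleton of K.
   (For framed necklaces the inclusion morphisms are unique when they exist,
   so consistency amounts to equality of cyclic words.) *)
Definition consistent_skel n (k : nat) (K : {set {set 'I_n}})
    (N : {set 'I_n} -> seq (bead n)) : Prop :=
  (forall s, s \in K -> (#|s| <= k.+1)%N -> framed_small s (N s)) /\
  (forall s t, s \in K -> (#|s| <= k.+1)%N -> t \in K -> t \subset s ->
     cyc_eq (restrict t (N s)) (N t)).

(* Framed edge necklace ijij (i < j): the bead after the bold i is the bold j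
   iff a([i,j]) = +1. *)
Definition edge_necklace n (e : int) (i j : 'I_n) : seq (bead n) :=
  if e == 1 then [:: (i, true); (j, true); (i, false); (j, false)]
  else [:: (i, true); (j, false); (i, false); (j, true)].

(* 1-cochains are functions on simplices (only values on edges matter). *)
Definition da n (a : {set 'I_n} -> int) (i j k : 'I_n) : int :=
  a [set j; k] - a [set i; k] + a [set i; j].

Definition Fval (z : int) : rat :=
  if z == 3 then 1 / 4
  else if z == -1 then 1 / 4
  else if z == -3 then - (1 / 4)
  else if z == 1 then - (1 / 4)
  else 0.

Definition Fda n (a : {set 'I_n} -> int) (i j k : 'I_n) : rat := Fval (da a i j k).

Definition pm1_cochain n (K : {set {set 'I_n}}) (a : {set 'I_n} -> int) : Prop :=
  forall i j : 'I_n, (i < j)%N -> [set i; j] \in K ->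
    a [set i; j] = 1 \/ a [set i; j] = -1.

Definition Fda_cocycle n (K : {set {set 'I_n}}) (a : {set 'I_n} -> int) : Prop :=
  forall i j k l : 'I_n, (i < j)%N -> (j < k)%N -> (k < l)%N -> [set i; j; k; l] \in K ->
    Fda a j k l - Fda a i k l + Fda a i j l - Fda a i j k = 0.

(* The consistent collection over the 2-skeleton determined by a: framed small
   necklaces, consistent, with the prescribed edge necklaces (the vertex
   necklaces are forced, the triangle ones are the framed small necklaces
   restricting to the edge ones). *)
Definition determined_by2 n (K : {set {set 'I_n}}) (a : {set 'I_n} -> int)
    (N : {set 'I_n} -> seq (bead n)) : Prop :=
  consistent_skel 2 K N /\
  (forall i j : 'I_n, (i < j)%N -> [set i; j] \in K ->
     cyc_eq (N [set i; j]) (edge_necklace (a [set i; j]) i j)).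

Definition extends n (K : {set {set 'I_n}}) (N2 N3 : {set 'I_n} -> seq (bead n)) : Prop :=
  forall s, s \in K -> (#|s| <= 3)%N -> cyc_eq (N3 s) (N2 s).

(* Main.v *)
Require Import Defs.
From mathcomp Require Import all_boot all_order all_algebra.
Import GRing.Theory Num.Theory.
From mathcomp Require Import zify ring.
Set Implicit Arguments. Unset Strict Implicit. Unset Printing Implicit Defensive.


Definition wordT := seq (nat * bool).
Definition restrictL (t : seq nat) (w : wordT) : wordT := filter (fun b => b.1 \in t) w.
Definition edgeL (e : bool) (i j : nat) : wordT :=
  if e then [:: (i, true); (j, true); (i, false); (j, false)]
  else [:: (i, true); (j, false); (i, false); (j, true)].
Definition cyc_eqb (T : eqType) (s t : seq T) : bool := has (fun k => rot k s == t) (iota 0 (size s).+1).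
Definition fsbL (m : nat) (u : wordT) : bool :=
  [&& size u == (2 * m)%N,
      all (fun x => (count_mem (x, true) u == 1%N) && (count_mem (x, false) u == 1%N)) (iota 0 m),
      rot m (map fst u) == map fst u & all (fun b => b.1 < m) u].
Fixpoint bools (k : nat) : seq (seq bool) :=
  if k is k'.+1 then [seq b :: l | b <- [:: true; false], l <- bools k'] else [:: [::]].
Fixpoint words (m k : nat) : seq wordT :=
  if k is k'.+1 then [seq b :: l | b <- [seq (i, c) | i <- iota 0 m, c <- [:: true; false]], l <- words m k']
  else [:: [::]].
Definition gen (m : nat) : seq wordT := [seq u1 ++ zip (map fst u1) b2 | u1 <- words m m, b2 <- bools m].
Definition frl (m : nat) := filter (fsbL m) (gen m).
Definition edges (m : nat) : seq (nat * nat) :=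
  [seq p <- [seq (i, j) | i <- iota 0 m, j <- iota 0 m] | p.1 < p.2].
Definition matches (m : nat) (u : wordT) (sg : seq bool) : bool :=
  all (fun p => cyc_eqb (restrictL [:: p.1.1; p.1.2] u) (edgeL p.2 p.1.1 p.1.2)) (zip (edges m) sg).
Definition canonF (F : seq wordT) m sg := head [::] [seq w <- F | matches m w sg].
Definition canon m sg := canonF (frl m) m sg.
Definition C1 m := let F := frl m in
  all (fun sg => let c := canonF F m sg in all (fun u => matches m u sg ==> cyc_eqb u c) F)
      (bools (size (edges m))).
Definition C2 m (cond : seq bool -> bool) := let F := frl m in
  all (fun sg => cond sg ==> let c := canonF F m sg in fsbL m c && matches m c sg)
      (bools (size (edges m))).
Definition fs (z : int) : int :=
  if z == 3%R then 1%R else if z == (-1)%R then 1%R else if z == (-3)%R then (-1)%R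
  else if z == 1%R then (-1)%R else 0%R.
Definition Av (sg : seq bool) (i j : nat) : int :=
  if nth false sg (index (i, j) (edges 4)) then 1%R else (-1)%R.
Definition cond4 (sg : seq bool) : bool :=
  let A := Av sg in
  (fs (A 2%N 3%N - A 1%N 3%N + A 1%N 2%N) - fs (A 2%N 3%N - A 0%N 3%N + A 0%N 2%N)
   + fs (A 1%N 3%N - A 0%N 3%N + A 0%N 1%N) - fs (A 1%N 2%N - A 0%N 2%N + A 0%N 1%N) == 0)%R.
Lemma C1_1 : C1 1. Proof. vm_compute. reflexivity. Qed.
Lemma C1_2 : C1 2. Proof. vm_compute. reflexivity. Qed.
Lemma C1_3 : C1 3. Proof. vm_compute. reflexivity. Qed.
Lemma C2_1 : C2 1 predT. Proof. vm_compute. reflexivity. Qed.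
Lemma C2_2 : C2 2 predT. Proof. vm_compute. reflexivity. Qed.
Lemma C2_3 : C2 3 predT. Proof. vm_compute. reflexivity. Qed.
Lemma C2_4 : C2 4 cond4. Proof. vm_compute. reflexivity. Qed.
Lemma C1_4 : C1 4. Proof. vm_compute. reflexivity. Qed.


Section Lists.
Variable T : eqType.
Implicit Types s t u : seq T.

Lemma cyc_refl s : cyc_eq s s.
Proof. by exists 0; rewrite rot0. Qed.

Lemma cyc_sym s t : cyc_eq s t -> cyc_eq t s.
Proof. by case=> k <-; exists (size (rot k s) - k); exact: rotK. Qed.

Lemma cyc_trans s t u : cyc_eq s t -> cyc_eq t u -> cyc_eq s u.
Proof.
case=> k <-; case=> l <-.
case: (leqP k (size s)) => hk; last first.
  by exists l; rewrite (@rot_oversize _ k) // ltnW.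
case: (leqP l (size s)) => hl; last first.
  by exists k; rewrite (@rot_oversize _ l) // size_rot ltnW.
by rewrite rot_add_mod //; eexists.
Qed.

Lemma cyc_eqbP s t : reflect (cyc_eq s t) (cyc_eqb s t).
Proof.
apply: (iffP hasP) => [[k _ /eqP <-]|[k <-]]; first by exists k.
case: (leqP k (size s)) => hk.
  by exists k; rewrite ?mem_iota //= ltnS.
by exists 0; rewrite ?mem_iota //= rot0 rot_oversize // ltnW.
Qed.

Lemma cyc_filter (p : pred T) s t : cyc_eq s t -> cyc_eq (filter p s) (filter p t).
Proof.
case=> k <-; exists (size (filter p (take k s))).
have e : filter p s = filter p (take k s) ++ filter p (drop k s) by rewrite -filter_cat cat_take_drop.
by rewrite e rot_size_cat /rot filter_cat.
Qed.

Lemma half_struct u m : size u = (2 * m)%N -> rot m u = u -> u = take m u ++ take m u.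
Proof.
move=> hs hr.
have e1 : drop m u = take m u.
  apply/eqP; move: (cat_take_drop m u) => e.
  have : drop m u ++ take m u == take m u ++ drop m u by rewrite -/(rot m u) hr e.
  rewrite eqseq_cat; first by case/andP.
  by rewrite size_drop size_take hs; case: ltnP => h; lia.
by rewrite -{1}(cat_take_drop m u) e1.
Qed.

End Lists.

Lemma cyc_map (T1 T2 : eqType) (f : T1 -> T2) s t : cyc_eq s t -> cyc_eq (map f s) (map f t).
Proof. by case=> k <-; exists k; rewrite map_rot. Qed.


Lemma count_fst (T : eqType) (x : T) (w : seq (T * bool)) :
  count (fun b => b.1 == x) w = (count_mem (x, true) w + count_mem (x, false) w)%N.
Proof.
elim: w => //= [[y c] w IH]; rewrite IH /=.
case: (eqVneq y x) => [->|ne].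
  by case: c; rewrite /= !xpair_eqE ?eqxx /=; lia.
by case: c; rewrite /= !xpair_eqE (negbTE ne) /=; lia.
Qed.

Lemma count_in_set n (t : {set 'I_n}) (w : seq (bead n)) :
  count (fun b => b.1 \in t) w = \sum_(x in t) count (fun b => b.1 == x) w.
Proof.
elim: w => [|b w IH] /=; first by rewrite big1.
rewrite big_split /= IH; congr (_ + _)%N.
case: (boolP (b.1 \in t)) => h.
  rewrite (bigD1 b.1) //= eqxx big1 // => x /andP [_ hx]; by rewrite eq_sym (negbTE hx).
by rewrite big1 // => x hx; case: eqP => // e; rewrite e hx in h.
Qed.

Lemma PC n (s t : {set 'I_n}) w : framed_small s w -> t \subset s ->
  count (fun b => b.1 \in t) w = (2 * #|t|)%N.
Proof.
case=> _ [hc _] sub; rewrite count_in_set.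
rewrite (eq_bigr (fun _ => 2%N)); first by rewrite sum_nat_const mulnC.
move=> x xt.
have [h1 h2] := hc x (subsetP sub x xt); by rewrite count_fst h1 h2.
Qed.

Lemma colours n (s : {set 'I_n}) w : framed_small s w -> all (fun b => b.1 \in s) w.
Proof.
move=> f; rewrite all_count (PC f (subxx s)); case: f => -> _; by [].
Qed.

Lemma restrict_id n (s : {set 'I_n}) w : framed_small s w -> restrict s w = w.
Proof. by move/colours => h; apply/all_filterP. Qed.

Lemma restrict_restrict n (s t : {set 'I_n}) w : t \subset s ->
  restrict t (restrict s w) = restrict t w.
Proof.
move=> sub; rewrite /restrict -filter_predI; apply: eq_filter => b /=.
by case: (boolP (b.1 \in t)) => //= h; rewrite (subsetP sub _ h).
Qed.

Lemma framed_restrict n (s t : {set 'I_n}) w : framed_small s w -> t \subset s ->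
  framed_small t (restrict t w).
Proof.
move=> f sub; have hsz : size (restrict t w) = (2 * #|t|)%N by rewrite size_filter (PC f sub).
split => //; split.
  move=> x xt; case: f => _ [hc _]; have [h1 h2] := hc x (subsetP sub x xt).
  rewrite /restrict !count_filter.
  by split; [rewrite -h1|rewrite -h2]; apply: eq_count => b /=; case: eqP => //= ->.
case: f => hs [_ hr].
have e : map fst w = take #|s| (map fst w) ++ take #|s| (map fst w).
  by apply: half_struct => //; rewrite size_map.
set c := take #|s| (map fst w) in e.
have e2 : map fst (restrict t w) = filter (mem t) c ++ filter (mem t) c.
  by rewrite /restrict -filter_map e filter_cat.
have hc : size (filter (mem t) c) = #|t|.
  move: (f_equal size e2); rewrite size_map hsz size_cat => h.
  by apply/eqP; rewrite -(eqn_pmul2l (isT : 0 < 2)) h mul2n addnn.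
by rewrite e2 -{1}hc rot_size_cat.
Qed.

Lemma restrict_cyc n (t : {set 'I_n}) w w' : cyc_eq w w' -> cyc_eq (restrict t w) (restrict t w').
Proof. exact: cyc_filter. Qed.


Lemma enum_sorted n (s : {set 'I_n}) : sorted (fun x y : 'I_n => (x < y)%N) (enum s).
Proof.
rewrite -deprecated_filter_index_enum.
apply: sorted_filter; first by move=> x y z; apply: ltn_trans.
rewrite /index_enum; unlock; rewrite -enumT.
have := iota_ltn_sorted 0 n; rewrite -val_enum_ord sorted_map. by [].
Qed.

Lemma mem_bools k l : size l = k -> l \in bools k.
Proof.
elim: k l => [|k IH] [|b l] // [hs].
change (b :: l \in [seq b :: l | b <- [:: true; false], l <- bools k]).
apply/allpairsPdep; exists b, l; split => //; last exact: IH.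
by case: b.
Qed.

Lemma mem_words m k (l : wordT) : size l = k -> all (fun b => b.1 < m) l -> l \in words m k.
Proof.
elim: k l => [|k IH] [|[i c] l] // [hs] /andP [hi hl].
change ((i, c) :: l \in [seq b :: l | b <- [seq (i, c) | i <- iota 0 m, c <- [:: true; false]],
   l <- words m k]).
apply/allpairsPdep; exists (i, c), l; split => //; last exact: IH.
by apply/allpairsPdep; exists i, c; split => //; [rewrite mem_iota; exact: hi | case: (c)].
Qed.

Definition gS n (x0 : 'I_n) (s : {set 'I_n}) (i : nat) : 'I_n := nth x0 (enum s) i.
Definition GS n (x0 : 'I_n) (s : {set 'I_n}) (b : nat * bool) : bead n := (gS x0 s b.1, b.2).
Definition HS n (s : {set 'I_n}) (b : bead n) : nat * bool := (index b.1 (enum s), b.2).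
Definition sigS n (x0 : 'I_n) (a : {set 'I_n} -> int) (s : {set 'I_n}) : seq bool :=
  [seq (a [set gS x0 s e.1; gS x0 s e.2] == 1%R) | e <- edges #|s|].
Definition NS n (x0 : 'I_n) (a : {set 'I_n} -> int) (s : {set 'I_n}) : seq (bead n) :=
  map (GS x0 s) (canon #|s| (sigS x0 a s)).
Definition EdgeOK n (a : {set 'I_n} -> int) (s : {set 'I_n}) (w : seq (bead n)) :=
  forall x y : 'I_n, (x < y)%N -> x \in s -> y \in s ->
    cyc_eq (restrict [set x; y] w) (edge_necklace (a [set x; y]) x y).

Section Transfer.
Variables (n : nat) (x0 : 'I_n) (s : {set 'I_n}).
Local Notation m := #|s|.
Local Notation g := (gS x0 s).
Local Notation G := (GS x0 s).
Local Notation H := (HS s).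

Lemma g_mem i : i < m -> g i \in s.
Proof. by move=> hi; rewrite /gS -mem_enum mem_nth // -cardE. Qed.

Lemma g_inj i j : i < m -> j < m -> (g i == g j) = (i == j).
Proof. by move=> hi hj; rewrite /gS nth_uniq ?enum_uniq // -cardE. Qed.

Lemma g_index x : x \in s -> g (index x (enum s)) = x.
Proof. by move=> hx; rewrite /gS nth_index // mem_enum. Qed.

Lemma index_lt x : x \in s -> index x (enum s) < m.
Proof. by move=> hx; rewrite cardE index_mem mem_enum. Qed.

Lemma index_g i : i < m -> index (g i) (enum s) = i.
Proof. by move=> hi; rewrite /gS index_uniq ?enum_uniq // -cardE. Qed.

Lemma g_lt i j : (i < j)%N -> j < m -> (g i < g j)%N.
Proof.
move=> hij hj; rewrite /gS.
apply: (sorted_ltn_nth (leT := fun x y : 'I_n => (x < y)%N)) => //.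
- by move=> x y z; apply: ltn_trans.
- exact: enum_sorted.
- by rewrite inE -cardE (ltn_trans hij).
- by rewrite inE -cardE.
Qed.

Lemma HG b : b.1 < m -> H (G b) = b.
Proof. by case: b => i c /= hi; rewrite /HS /GS /= index_g. Qed.

Lemma GH b : b.1 \in s -> G (H b) = b.
Proof. by case: b => x c /= hx; rewrite /HS /GS /= g_index. Qed.

Lemma map_HG (l : wordT) : all (fun b => b.1 < m) l -> map H (map G l) = l.
Proof.
move=> hl; rewrite -map_comp -[RHS]map_id; apply/eq_in_map => b hb /=.
by apply: HG; exact: (allP hl b hb).
Qed.

Lemma restrict_map (l : wordT) i j : all (fun b => b.1 < m) l -> i < m -> j < m ->
  restrict [set g i; g j] (map G l) = map G (restrictL [:: i; j] l).
Proof.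
move=> hl hi hj; rewrite /restrict /restrictL filter_map; congr map.
apply: eq_in_filter => b hb /=; have hb1 := allP hl b hb.
by rewrite !inE /GS /= !g_inj.
Qed.

Lemma edge_map (A : int) i j : edge_necklace A (g i) (g j) = map G (edgeL (A == 1%R) i j).
Proof. by rewrite /edge_necklace /edgeL; case: (A == 1%R). Qed.

Lemma cyc_unmap (l1 l2 : wordT) : all (fun b => b.1 < m) l1 -> all (fun b => b.1 < m) l2 ->
  cyc_eq (map G l1) (map G l2) -> cyc_eq l1 l2.
Proof.
move=> h1 h2 [k e]; exists k; rewrite -(map_HG h2) -e -map_rot map_HG //.
by apply/allP => b; rewrite mem_rot => /(allP h1).
Qed.

Lemma TU w : framed_small s w -> w = map G (map H w) /\ map H w \in frl m.
Proof.
move=> f; have hcol := colours f.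
split.
  rewrite -map_comp -[LHS]map_id; apply/esym/eq_in_map => b hb /=.
  by apply: GH; exact: (allP hcol b hb).
set u := map H w.
have hu : all (fun b => b.1 < m) u.
  by apply/allP => b /mapP [b' hb' ->]; rewrite /HS /= index_lt // (allP hcol b' hb').
case: (f) => hs [hc hr].
have hsu : size u = (2 * m)%N by rewrite size_map.
have hru : rot m (map fst u) = map fst u.
  by rewrite /u -map_comp (eq_map (_ : fst \o H =1 (fun x => index x (enum s)) \o fst)) //
    map_comp -map_rot hr.
rewrite mem_filter; apply/andP; split.
  rewrite /fsbL hsu eqxx hru eqxx hu /= andbT.
  apply/allP => x; rewrite mem_iota /= => hx.
  have [h1 h2] := hc (g x) (g_mem hx).
  have ec c : count_mem (x, c) u = count_mem (g x, c) w.
    rewrite count_map; apply: eq_in_count => b hb /=.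
    have hb1 := allP hcol b hb.
    rewrite /HS !xpair_eqE; congr andb.
    apply/eqP/eqP => [<-|->]; [by rewrite g_index | by rewrite index_g].
  by rewrite !ec h1 h2 !eqxx.
have e : map fst u = take m (map fst u) ++ take m (map fst u).
  by apply: half_struct => //; rewrite size_map.
set u1 := take m u.
have ed : drop m u = zip (map fst u1) (map snd (drop m u)).
  rewrite -{1}(zip_unzip (drop m u)); congr zip.
  rewrite /unzip1 map_drop /u1 map_take.
  have : take m (map fst u) ++ drop m (map fst u) == take m (map fst u) ++ take m (map fst u).
    by rewrite cat_take_drop -e.
  by rewrite eqseq_cat // => /andP [_ /eqP ->].
rewrite -(cat_take_drop m u) ed /gen.
apply/allpairsPdep; exists u1, (map snd (drop m u)); split => //.
  apply: mem_words; first by rewrite size_take hsu; case: ltnP => h; lia.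
  by rewrite /u1; apply/allP => b hb; apply: (allP hu); apply: mem_take hb.
by apply: mem_bools; rewrite size_map size_drop hsu; lia.
Qed.

End Transfer.


Lemma C1E m : C1 m = all (fun sg => all (fun u => matches m u sg ==> cyc_eqb u (canon m sg)) (frl m))
  (bools (size (edges m))).
Proof. by []. Qed.

Lemma C2E m cond : C2 m cond = all (fun sg => cond sg ==> (fsbL m (canon m sg) && matches m (canon m sg) sg))
  (bools (size (edges m))).
Proof. by []. Qed.

Lemma C1_all m : 0 < m <= 4 -> C1 m.
Proof.
case: m => [|[|[|[|[|m]]]]] hm; [by case/andP: hm|exact: C1_1|exact: C1_2|exact: C1_3|exact: C1_4|by case/andP: hm].
Qed.

Definition condm m := if m == 4 then cond4 else predT.

Lemma C2_all m : 0 < m <= 4 -> C2 m (condm m).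
Proof.
case: m => [|[|[|[|[|m]]]]] hm; [by case/andP: hm|exact: C2_1|exact: C2_2|exact: C2_3|exact: C2_4|by case/andP: hm].
Qed.

Lemma mem_edges m e : e \in edges m -> e.1 < e.2 < m.
Proof.
rewrite /edges mem_filter => /andP [h1 /allpairsPdep [i [j [hi hj he]]]]; subst e.
by move: h1 hj; rewrite mem_iota add0n /= => -> ->.
Qed.

Lemma edges_mem m i j : i < j -> j < m -> (i, j) \in edges m.
Proof.
move=> hij hj; rewrite /edges mem_filter hij /=.
by apply/allpairsPdep; exists i, j; rewrite !mem_iota /= hj (ltn_trans hij hj).
Qed.

Lemma frl_col m u : u \in frl m -> all (fun b => b.1 < m) u.
Proof. by rewrite mem_filter => /andP [/and4P [_ _ _ h] _]. Qed.

Lemma restrictL_col m t (u : wordT) : all (fun b => b.1 < m) u -> all (fun b => b.1 < m) (restrictL t u).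
Proof. by move=> h; apply/allP => b; rewrite mem_filter => /andP [_ hb]; exact: (allP h b hb). Qed.

Lemma edgeL_col m e i j : i < m -> j < m -> all (fun b => b.1 < m) (edgeL e i j).
Proof. by move=> hi hj; case: e; rewrite /= hi hj. Qed.

Section UE.
Variables (n : nat) (x0 : 'I_n) (a : {set 'I_n} -> int) (s : {set 'I_n}).
Local Notation m := #|s|.
Local Notation g := (gS x0 s).
Local Notation G := (GS x0 s).

Lemma zip_sig : zip (edges m) (sigS x0 a s) =
  [seq (e, a [set g e.1; g e.2] == 1%R) | e <- edges m].
Proof. by rewrite /sigS -{1}(map_id (edges m)) zip_map. Qed.

Lemma U w : 0 < m <= 4 -> framed_small s w -> EdgeOK a s w -> cyc_eq w (NS x0 a s).
Proof.
move=> hm f hE; have [ew hu] := TU x0 f.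
set u := map (HS s) w in ew hu.
have hcol := frl_col hu.
have hmat : matches m u (sigS x0 a s).
  rewrite /matches zip_sig all_map; apply/allP => [[i j]] he /=.
  have /andP [hij hj] := mem_edges he; have hi := ltn_trans hij hj.
  have := hE (g i) (g j) (g_lt x0 hij hj) (g_mem x0 hi) (g_mem x0 hj).
  rewrite {1}ew restrict_map // edge_map => /cyc_unmap h.
  apply/cyc_eqbP; apply: h; [exact: restrictL_col | exact: edgeL_col].
have := C1_all hm; rewrite C1E => /allP.
have hb : sigS x0 a s \in bools (size (edges m)) by apply: mem_bools; rewrite size_map.
move=> /(_ _ hb) /allP /(_ _ hu) /implyP /(_ hmat) /cyc_eqbP hc.
by rewrite ew /NS; apply: cyc_map.
Qed.

Lemma E : 0 < m <= 4 -> condm m (sigS x0 a s) ->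
  framed_small s (NS x0 a s) /\ EdgeOK a s (NS x0 a s).
Proof.
move=> hm hcond.
have := C2_all hm; rewrite C2E => /allP.
have hb : sigS x0 a s \in bools (size (edges m)) by apply: mem_bools; rewrite size_map.
move=> /(_ _ hb) /implyP /(_ hcond) /andP [hf hmat].
set c := canon m (sigS x0 a s) in hf hmat.
case/and4P: hf => /eqP hs /allP hc /eqP hr hcol.
have cnt k b : k < m -> count_mem (g k, b) (map G c) = count_mem (k, b) c.
  move=> hk; rewrite count_map; apply: eq_in_count => b' hb' /=.
  have hb1 := allP hcol b' hb'.
  by rewrite /GS !xpair_eqE g_inj.
split.
  split; first by rewrite /NS size_map hs.
  split.
    move=> x hx; rewrite /NS -(g_index x0 hx) !cnt ?index_lt //.
    have := hc (index x (enum s)); rewrite mem_iota /= index_lt // => /(_ isT) /andP [/eqP -> /eqP ->].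
    by [].
  rewrite /NS -map_comp (eq_map (_ : fst \o G =1 g \o fst)) // map_comp -map_rot hr.
  by [].
move=> x y hxy hx hy.
have hi := index_lt hx; have hj := index_lt hy.
have hij : index x (enum s) < index y (enum s).
  case: (ltngtP (index x (enum s)) (index y (enum s))) => // h.
    have := g_lt x0 h hi; rewrite !g_index // => h'.
    by move: (ltn_trans hxy h'); rewrite ltnn.
  by move: hxy; rewrite -(g_index x0 hx) h g_index // ltnn.
rewrite -(g_index x0 hx) -(g_index x0 hy) /NS restrict_map // edge_map.
apply: cyc_map; apply/cyc_eqbP.
move: hmat; rewrite /matches zip_sig all_map => /allP.
by move=> /(_ _ (edges_mem hij hj)).
Qed.

End UE.


Lemma Fval_fs z : Fval z = ((fs z)%:~R / 4)%R.
Proof.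
rewrite /Fval /fs.
case: eqP => _; first by rewrite mulr1z.
case: eqP => _; first by rewrite mulr1z.
case: eqP => _; first by rewrite mulrN1z mulNr.
case: eqP => _; first by rewrite mulrN1z mulNr.
by rewrite mulr0z mul0r.
Qed.

Lemma sub_pair n (s : {set 'I_n}) x y : x \in s -> y \in s -> [set x; y] \subset s.
Proof. by move=> hx hy; apply/subsetP => z; rewrite !inE => /orP [] /eqP ->. Qed.

Lemma pair_neq0 n (x y : 'I_n) : [set x; y] != set0.
Proof. by apply/set0Pn; exists x; rewrite !inE eqxx. Qed.

Lemma nth_sig n (x0 : 'I_n) (a : {set 'I_n} -> int) (s : {set 'I_n}) i j : (i < j)%N -> j < #|s| ->
  nth false (sigS x0 a s) (index (i, j) (edges #|s|)) = (a [set gS x0 s i; gS x0 s j] == 1%R).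
Proof.
move=> hij hj; have he := edges_mem hij hj.
by rewrite /sigS (nth_map (0%N, 0%N)) ?index_mem // nth_index.
Qed.

Lemma Cond n (x0 : 'I_n) (K : {set {set 'I_n}}) (a : {set 'I_n} -> int) s :
  simplicial_complex K -> pm1_cochain K a -> Fda_cocycle K a -> s \in K -> #|s| = 4 ->
  cond4 (sigS x0 a s).
Proof.
move=> [h0 hcl] hpm hcoc hs h4.
set g := gS x0 s.
have hA i j : (i < j)%N -> j < 4 -> (if nth false (sigS x0 a s) (index (i, j) (edges 4)) then 1 else -1)%R
   = a [set g i; g j].
  move=> hij hj; rewrite -h4 nth_sig ?h4 //.
  have hi := ltn_trans hij hj.
  have hK : [set g i; g j] \in K.
    apply: (hcl s) => //; last exact: pair_neq0.
    by apply: sub_pair; apply: g_mem; rewrite h4.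
  have hj' : j < #|s| by rewrite h4.
  have := hpm (g i) (g j) (g_lt x0 hij hj') hK.
  by case=> ->.
have ee : enum s = [:: g 0; g 1; g 2; g 3]%N.
  by rewrite -(mkseq_nth x0 (enum s)) -cardE h4.
have es : s = [set g 0; g 1; g 2; g 3]%N.
  apply/setP => x; by rewrite -mem_enum ee !inE !orbA.
have l4 k : (k < 4)%N -> k < #|s| by rewrite h4.
have := hcoc (g 0) (g 1) (g 2) (g 3) (g_lt x0 (isT : 0 < 1)%N (l4 1%N isT))
  (g_lt x0 (isT : 1 < 2)%N (l4 2%N isT)) (g_lt x0 (isT : 2 < 3)%N (l4 3%N isT)).
rewrite -es => /(_ hs).
rewrite /Fda /da !Fval_fs /cond4 /Av !hA //.
set d1 := fs _; set d2 := fs _; set d3 := fs _; set d4 := fs _.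
move=> H; apply/eqP; apply/eqP; rewrite -(intr_eq0 rat).
have e : ((d1 - d2 + d3 - d4)%:~R : rat)%R = (4 * 0)%R.
  by rewrite -H; field.
by rewrite e mulr0.
Qed.


Lemma MainGen n (x0 : 'I_n) (K : {set {set 'I_n}}) (a : {set 'I_n} -> int) :
  simplicial_complex K ->
  pm1_cochain K a ->
  Fda_cocycle K a ->
  (exists N2, determined_by2 K a N2) /\
  (forall N2, determined_by2 K a N2 ->
     (exists N3, consistent_skel 3 K N3 /\ extends K N2 N3) /\
     (forall N3 N3', consistent_skel 3 K N3 -> extends K N2 N3 ->
                     consistent_skel 3 K N3' -> extends K N2 N3' ->
        forall s, s \in K -> (#|s| <= 4)%N -> cyc_eq (N3 s) (N3' s))).
Proof.
move=> hK hpm hcoc; have [h0 hcl] := hK.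
set N := NS x0 a.
have pos s : s \in K -> 0 < #|s|.
  by move=> hs; rewrite card_gt0; apply/negP => /eqP e; move: h0; rewrite -e hs.
have hm s : s \in K -> #|s| <= 4 -> 0 < #|s| <= 4 by move=> hs h; rewrite pos.
have HE s : s \in K -> #|s| <= 4 -> framed_small s (N s) /\ EdgeOK a s (N s).
  move=> hs h4; apply: E; first exact: hm.
  rewrite /condm; case: ifP => [/eqP e|_ //]; exact: (Cond x0 hK hpm hcoc hs e).
have HU s w : s \in K -> #|s| <= 4 -> framed_small s w -> EdgeOK a s w -> cyc_eq w (N s).
  by move=> hs h4; apply: U; apply: hm.
have ER (s t : {set 'I_n}) w : EdgeOK a s w -> t \subset s -> EdgeOK a t (restrict t w).
  move=> hE sub x y hxy hx hy.
  rewrite restrict_restrict; last exact: sub_pair.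
  by apply: hE => //; apply: (subsetP sub).
have pairK (s : {set 'I_n}) x y : s \in K -> x \in s -> y \in s -> [set x; y] \in K.
  by move=> hs hx hy; apply: (hcl s) => //; [exact: sub_pair | exact: pair_neq0].
have pair_card (x y : 'I_n) : #|[set x; y]| <= 3 by rewrite cards2; case: (_ != _).
have consN k : k <= 3 -> consistent_skel k K N.
  move=> hk; split.
    move=> s hs h; have h4 : #|s| <= 4 by apply: leq_trans h _.
    exact: (HE s hs h4).1.
  move=> s t hs h ht sub.
  have h4 : #|s| <= 4 by apply: leq_trans h _.
  have [f hE] := HE s hs h4.
  exact: (HU t _ ht (leq_trans (subset_leq_card sub) h4) (framed_restrict f sub) (ER _ _ _ hE sub)).
split.
  exists N; split; first exact: consN.
  move=> i j hij he.
  have [f hE] := HE _ he (leq_trans (pair_card i j) (isT : 3 <= 4)).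
  have := hE i j hij; rewrite !inE !eqxx orbT => /(_ isT isT).
  by rewrite (restrict_id f).
move=> N2 [[hf2 hc2] hedge].
have EO2 s : s \in K -> #|s| <= 3 -> EdgeOK a s (N2 s).
  move=> hs h3 x y hxy hx hy.
  exact: (cyc_trans (hc2 s _ hs h3 (pairK s x y hs hx hy) (sub_pair hx hy))
           (hedge x y hxy (pairK s x y hs hx hy))).
split.
  exists N; split; first exact: consN.
  move=> s hs h3; apply: cyc_sym.
  have h4 : #|s| <= 4 by apply: leq_trans h3 _.
  exact: (HU s _ hs h4 (hf2 s hs h3) (EO2 s hs h3)).
have EO3 N3 : consistent_skel 3 K N3 -> extends K N2 N3 ->
    forall s, s \in K -> #|s| <= 4 -> cyc_eq (N3 s) (N s).
  move=> [hf3 hc3] hext s hs h4; apply: HU => //; first exact: hf3.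
  move=> x y hxy hx hy; have he := pairK s x y hs hx hy.
  exact: (cyc_trans (hc3 s _ hs h4 he (sub_pair hx hy))
    (cyc_trans (hext _ he (pair_card x y)) (hedge x y hxy he))).
move=> N3 N3' c3 e3 c3' e3' s hs h4.
exact: cyc_trans (EO3 _ c3 e3 s hs h4) (cyc_sym (EO3 _ c3' e3' s hs h4)).
Qed.

Unset Implicit Arguments.

Theorem mainTheorem11 (n : nat) (K : {set {set 'I_n}}) (a : {set 'I_n} -> int) :
  simplicial_complex K ->
  pm1_cochain K a ->
  Fda_cocycle K a ->
  (exists N2, determined_by2 K a N2) /\
  (forall N2, determined_by2 K a N2 ->
     (exists N3, consistent_skel 3 K N3 /\ extends K N2 N3) /\
     (forall N3 N3', consistent_skel 3 K N3 -> extends K N2 N3 ->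
                     consistent_skel 3 K N3' -> extends K N2 N3' ->
        forall s, s \in K -> (#|s| <= 4)%N -> cyc_eq (N3 s) (N3' s))).
Proof.
case: n K a => [|n] K a; last exact: (@MainGen n.+1 ord0 K a).
move=> [h0 _] _ _.
have nK s : s \in K = false.
  have -> : s = set0 by apply/setP => -[].
  by apply/negbTE.
split.
  exists (fun _ => [::]); split; first by split => s; rewrite nK.
  by move=> [].
move=> N2 _; split.
  by exists N2; split; [split => s; rewrite nK | move=> s; rewrite nK].
by move=> N3 N3' _ _ _ _ s; rewrite nK.
Qed.
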